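(* For every positive integer $n$ and every permutation $\pi:Q_n\to Q_n$ of $Q_n=\{q_1,\dots,q_n\}$ there is a word $\alpha_\pi\in\Sigma_n^*$ such that for all $q,q'\in Q_n$: there exists $w\in\{1\}^*$ with $\langle q,\langle\alpha_\pi,w\rangle,q'\rangle\in\Delta_n^*$ if and only if $q'=\pi(q)$.
   Context: Let $\Sigma_n=\{a_1,\dots,a_n\}$, output monoid the free monoid $\{1\}^*$. $\mathcal{T}_n=\langle\Sigma_n^*\times\{1\}^*,Q,\{s\},\{f\},\Delta_n\rangle$ with $Q=\{s,q_1,\dots,q_n,f\}$ and $\Delta_n=\Delta_{s,n}\cup\Delta_{Q_n}\cup\Delta_{f,n}$ where: $\Delta_{s,n}=\{\langle s,\langle a_j,1^{i-1}\rangle,q_i\rangle:1\le i,j\le n\}$; $\Delta_{Q_n}$ consists, for all $1\le i,j\le n$, of $\langle q_i,\langle a_j,1^n\rangle,q_i\rangle$ if $i\notin\{1,j\}$, $\langle q_1,\langle a_j,1^{n+j-1}\rangle,q_j\rangle$ if $i=1$, and $\langle q_j,\langle a_j,1^{n-j+1}\rangle,q_1\rangle$ if $i=j\neq1$; $\Delta_{f,n}=\{\langle q_i,\langle a_j,1^{2n-i+1}\rangle,f\rangle:1\le j\le i\le n\}$. $\Delta_n^*$ is the generalized transition relation: labels (input word, concatenated output) of paths, including empty paths $\langle q,\langle\varepsilon,\varepsilon\rangle,q\rangle$. *)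

(* Defs.v *)
(* Letters a_j are encoded by the natural number j (1 <= j <= n);
   an output word 1^k in the free monoid {1}^* is encoded by its length k;
   concatenation of outputs is addition. *)
From mathcomp Require Import all_boot all_order.
From mathcomp Require Import perm.
Set Implicit Arguments. Unset Strict Implicit. Unset Printing Implicit Defensive.

(* States Q = {s, q_1, ..., q_n, f}; q_i is encoded as qst i (1-based). *)
Inductive state := sst | qst of nat | fst.

(* Delta_n = Delta_{s,n} u Delta_{Q_n} u Delta_{f,n} :
   delta n p j k p'  means  <p, <a_j, 1^k>, p'> \in Delta_n. *)
Inductive delta (n : nat) : state -> nat -> nat -> state -> Prop :=
  | dS i j : 1 <= i <= n -> 1 <= j <= n ->
      delta n sst j (i - 1) (qst i)
  | dQstay i j : 1 <= i <= n -> 1 <= j <= n -> i != 1 -> i != j ->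
      delta n (qst i) j n (qst i)
  | dQ1 j : 1 <= j <= n ->
      delta n (qst 1) j (n + j - 1) (qst j)
  | dQback j : 1 <= j <= n -> j != 1 ->
      delta n (qst j) j (n - j + 1) (qst 1)
  | dF i j : 1 <= j -> j <= i -> i <= n ->
      delta n (qst i) j (2 * n - i + 1) fst.

Inductive delta_star (n : nat) : state -> seq nat -> nat -> state -> Prop :=
  | ds_nil p : delta_star n p [::] 0 p
  | ds_cons p a k p' w m p'' :
      delta n p a k p' -> delta_star n p' w m p'' ->
      delta_star n p (a :: w) (k + m) p''.

(* q_{k+1} for k : 'I_n, identifying Q_n with 'I_n. *)
Definition qof (n : nat) (k : 'I_n) : state := qst k.+1.

Definition is_word (n : nat) (w : seq nat) : bool := all (fun a => 1 <= a <= n) w.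

(* Main.v *)
Require Import Defs.
From mathcomp Require Import all_boot all_order.
From mathcomp Require Import perm.
From mathcomp Require Import fingroup.
From mathcomp Require Import zify.
Set Implicit Arguments. Unset Strict Implicit. Unset Printing Implicit Defensive.

Section Aux.
Variable n' : nat.
Local Notation n := n'.+1.

Definition Pw (w : seq nat) : {perm 'I_n} :=
  (\prod_(j <- w) tperm ord0 (inord j.-1))%g.

Lemma fst_dead w m p : delta_star n fst w m p -> p = fst.
Proof. move=> H; inversion H => //; subst; match goal with H : delta _ _ _ _ _ |- _ => inversion H end. Qed.

Lemma step_inv (k : 'I_n) j m p :
  delta n (qof k) j m p -> p = fst \/ p = qof (tperm ord0 (inord j.-1) k).
Proof.
rewrite /qof; move E : (qst k.+1) => s H.
case: H E => [i j0 Hi Hj0|i j0 Hi Hj0 i1 ij|j0 Hj0|j0 Hj0 j1|i j0 H1 H2 H3] //= [Ei].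
- right; rewrite tpermD; [by rewrite Ei| |].
  + apply/eqP => /(congr1 val) /=; lia.
  + apply/eqP => /(congr1 val) /=; rewrite inordK; lia.
- right; have -> : k = ord0 by apply: val_inj => /=; lia.
  rewrite tpermL /= inordK; [congr qst; lia | lia].
- right; have -> : k = inord j0.-1 by apply: val_inj => /=; rewrite inordK; lia.
  by rewrite tpermR.
- by left.
Qed.

Lemma step_ex (k : 'I_n) j : 1 <= j <= n ->
  exists m, delta n (qof k) j m (qof (tperm ord0 (inord j.-1) k)).
Proof.
move=> Hj; have Hv : nat_of_ord (inord j.-1 : 'I_n) = j.-1 by rewrite inordK; lia.
have [->|k0] := eqVneq k ord0.
  rewrite tpermL /qof Hv; exists (n + j - 1).
  have -> : j.-1.+1 = j by lia. by apply: dQ1.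
have [kj|kj] := eqVneq k (inord j.-1).
  have Hk : nat_of_ord k = j.-1 by rewrite kj Hv.
  rewrite kj tpermR /qof Hv /=; exists (n - j + 1).
  have -> : j.-1.+1 = j by lia. apply: dQback => //.
  apply/eqP => j1; move/eqP: k0; apply; apply: val_inj => /=; lia.
rewrite tpermD; [|by rewrite eq_sym|by rewrite eq_sym].
have := ltn_ord k; have := ltn_ord (inord j.-1 : 'I_n) => _ kn.
exists n; rewrite /qof; apply: dQstay; try lia.
- apply/eqP => E; move/eqP: k0; apply; apply: val_inj => /=; lia.
- apply/eqP => E; move/eqP: kj; apply; apply: val_inj => /=; lia.
Qed.

Lemma PwE j w (k : 'I_n) : Pw (j :: w) k = Pw w (tperm ord0 (inord j.-1) k).
Proof. by rewrite /Pw big_cons permM. Qed.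

Lemma runA w (k : 'I_n) : is_word n w ->
  exists m, delta_star n (qof k) w m (qof (Pw w k)).
Proof.
elim: w k => [|j w IH] k /=.
  by move=> _; exists 0; rewrite /Pw big_nil perm1; constructor.
move/andP => [Hj Hw]; have [m1 H1] := step_ex k Hj.
have [m2 H2] := IH (tperm ord0 (inord j.-1) k) Hw.
exists (m1 + m2); rewrite PwE; by econstructor; eauto.
Qed.

Lemma runB0 p w m r : delta_star n p w m r ->
  forall k : 'I_n, p = qof k -> r = fst \/ r = qof (Pw w k).
Proof.
elim => [p0|p0 a k0 p1 w0 m0 p2 Hd Hs IH] k E.
  by right; subst; rewrite /Pw big_nil perm1.
subst; case: (step_inv Hd) => Ep.
  by subst; left; apply: (fst_dead Hs).
by rewrite PwE; apply: IH.
Qed.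

Lemma runB w m (k : 'I_n) i :
  delta_star n (qof k) w m (qst i) -> qst i = qof (Pw w k).
Proof. by move=> H; case: (runB0 H (erefl _)). Qed.

Lemma tperm_word (a b : 'I_n) :
  exists ws : seq 'I_n, (\prod_(c <- ws) tperm ord0 c)%g = tperm a b.
Proof.
have [->|ab] := eqVneq a b.
  by exists [::]; rewrite big_nil tperm1.
have [->|b0] := eqVneq b ord0.
  by exists [:: a]; rewrite big_cons big_nil mulg1 tpermC.
exists [:: a; b; a]; rewrite !big_cons big_nil mulg1.
have := tpermJ ord0 b (tperm ord0 a); rewrite conjgE tpermV tpermL.
rewrite tpermD; [|by rewrite eq_sym|by []].
by move=> <-; rewrite mulgA.
Qed.

Lemma perm_word (s : {perm 'I_n}) :
  exists ws : seq 'I_n, (\prod_(c <- ws) tperm ord0 c)%g = s.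
Proof.
case: (prod_tpermP s) => ts -> _.
elim: ts => [|t ts [ws IH]].
  by exists [::]; rewrite !big_nil.
have [ws1 H1] := tperm_word t.1 t.2.
exists (ws1 ++ ws); by rewrite big_cat big_cons /= H1 IH.
Qed.

End Aux.

Theorem lemma10 (n : nat) (hn : 0 < n) (pi : {perm 'I_n}) :
  exists alpha : seq nat, is_word n alpha /\
    forall q q' : 'I_n,
      (exists w : nat, delta_star n (qof q) alpha w (qof q')) <-> q' = pi q.
Proof.
case: n hn pi => // n _ pi.
have [ws Hws] := perm_word pi.
have HP : Pw n (map (fun c : 'I_n.+1 => (val c).+1) ws) = pi.
  rewrite /Pw big_map -Hws; apply: eq_bigr => c _ /=; by rewrite inord_val.
exists (map (fun c : 'I_n.+1 => (val c).+1) ws); split.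
  rewrite /is_word all_map; apply/allP => c _ /=; have := ltn_ord c; lia.
move=> q q'; split.
  move=> [w H]; have := runB H; rewrite HP /qof => [[E]].
  by apply: val_inj.
move=> ->; rewrite -HP; apply: runA.
rewrite /is_word all_map; apply/allP => c _ /=; have := ltn_ord c; lia.
Qed.
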